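(* Let $h\ge 0$ be an integer and let $G$ be an $h$-almost-bipartite graph on $n$ vertices. Then $G$ contains at most $2^h n^2+2$ cliques.
   Context: Graphs are simple, finite and undirected. A clique is a set of pairwise adjacent vertices (the empty set and single vertices count). A graph $G$ is $h$-almost bipartite if $G-A$ is bipartite for some set $A\subseteq V(G)$ with $|A|\le h$. *)

(* Defs.v *)
From mathcomp Require Import all_boot.
Set Implicit Arguments. Unset Strict Implicit. Unset Printing Implicit Defensive.

Definition simple_graph (T : finType) (e : rel T) : Prop :=
  symmetric e /\ irreflexive e.

Definition is_clique (T : finType) (e : rel T) (S : {set T}) : bool :=
  [forall x in S, forall y in S, (x != y) ==> e x y].

Definition bipartite_minus (T : finType) (e : rel T) (A : {set T}) : Prop :=
  exists c : T -> bool,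
    forall x y, x \notin A -> y \notin A -> e x y -> c x != c y.

Definition almost_bipartite (T : finType) (e : rel T) (h : nat) : Prop :=
  exists A : {set T}, #|A| <= h /\ bipartite_minus e A.

(* Number of cliques (including the empty set and singletons). *)
Definition num_cliques (T : finType) (e : rel T) : nat :=
  #|[set S : {set T} | is_clique e S]|.

(* Main.v *)
Require Import Defs.
From mathcomp Require Import all_boot.
From mathcomp Require Import zify.
Set Implicit Arguments. Unset Strict Implicit. Unset Printing Implicit Defensive.

Lemma bin2_double m : ('C(m, 2)).*2 = m * m.-1.
Proof.
elim: m => [//|m IH]; rewrite binS bin1 doubleD IH /=.
case: m {IH} => [//|m] /=; rewrite -mul2n; lia.
Qed.

Lemma arith (a h n c : nat) : a <= h -> a <= n -> c.*2 = n * n.-1 ->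
  2 ^ a * (1 + n + c) <= 2 ^ h * n ^ 2 + 2.
Proof.
move=> ah an hc.
have Pq : 2 ^ a <= 2 ^ h by rewrite leq_exp2l.
have P1 : 1 <= 2 ^ a by rewrite expn_gt0.
case: n an hc => [|[|n]] an hc.
- have -> : a = 0 by lia. have -> : c = 0 by lia. by rewrite (leq_trans _ (leq_addl _ 2)).
- have -> : c = 0 by lia.
  case: a an ah Pq P1 => [|[|//]] _ ah Pq P1.
  + rewrite expn0 mul1n exp1n muln1 addnC; exact: (leq_trans _ (leq_addl (2^h) 2)).
  + rewrite expn1 exp1n muln1 in Pq *.
    by rewrite mul2n -addnn leq_add.
- have hf : 1 + n.+2 + c <= n.+2 ^ 2 by rewrite /= in hc; lia.
  apply: leq_trans (leq_addr 2 _).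
  apply: leq_mul => //.
Qed.

Theorem lemma8 (T : finType) (e : rel T) (h : nat) :
  simple_graph e -> almost_bipartite e h ->
  num_cliques e <= 2 ^ h * #|T| ^ 2 + 2.
Proof.
move=> [esym eirr] [A [hA [c hc]]].
set X := [set S : {set T} | is_clique e S].
set Q := [set B : {set T} | #|B| <= 2].
have cl2 : forall S, S \in X -> #|S :\: A| <= 2.
  move=> S; rewrite inE => /forallP hS.
  have inj : {in S :\: A &, injective c}.
    move=> x y; rewrite !inE => /andP[xA xS] /andP[yA yS] cxy.
    apply/eqP; apply/negPn/negP => nxy.
    have := forallP (implyP (hS x) xS) y.
    rewrite yS nxy /= => exy.
    by move: (hc x y xA yA exy); rewrite cxy eqxx.
  rewrite -(card_in_imset inj).
  apply: leq_trans (max_card _) _; by rewrite card_bool.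
set g := fun S : {set T} => (S :&: A, S :\: A).
have ginj : {in X &, injective g}.
  move=> S1 S2 _ _ [e1 e2]; by rewrite -(setID S1 A) e1 e2 setID.
have sub : g @: X \subset setX (powerset A) Q.
  apply/subsetP => p /imsetP [S SX ->]; rewrite !inE /=.
  by rewrite subsetIr cl2.
have hQ : #|Q| <= 1 + #|T| + 'C(#|T|, 2).
  set D := fun k => [set B : {set T} | #|B| == k].
  have QD : Q \subset D 0 :|: D 1 :|: D 2.
    apply/subsetP => B; rewrite !inE.
    by case: #|B| => [|[|[|]]].
  apply: leq_trans (subset_leq_card QD) _.
  apply: leq_trans (leq_card_setU _ _) _.
  rewrite !card_draws.
  apply: leq_add => //.
  apply: leq_trans (leq_card_setU _ _) _.
  by rewrite !card_draws bin0 bin1.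
rewrite /num_cliques -/X -(card_in_imset ginj).
apply: leq_trans (subset_leq_card sub) _.
rewrite cardsX card_powerset.
apply: leq_trans (leq_mul (leqnn _) hQ) _.
apply: arith => //; first exact: max_card.
exact: bin2_double.
Qed.
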